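(* Let $\mathcal{F}=\mathcal{B}(K_3)$. Then, as $k\to\infty$, $$\frac{k}{2}-o(k)\;\le\; R_3(\mathcal{F},k)\;\le\;\frac{3k}{4}+o(k).$$
   Context: For a graph $G$, a hypergraph $H$ is a Berge-$G$ hypergraph if there are an injective map $\phi:V(G)\to V(H)$ and pairwise distinct hyperedges $e_{xy}\in E(H)$, one for each $xy\in E(G)$, with $\phi(x),\phi(y)\in e_{xy}$. $\mathcal{B}(G)$ denotes the family of all Berge-$G$ hypergraphs. $K_n^r$ denotes the complete $r$-uniform hypergraph on $n$ vertices. For a family $\mathcal{H}$ of $r$-uniform hypergraphs and integers $k\ge 2$, $r\ge 2$, the Ramsey number $R_r(\mathcal{H},k)$ is the smallest integer $n$ such that every coloring of the hyperedges of $K_n^r$ with $k$ colors contains a monochromatic subhypergraph belonging to $\mathcal{H}$. *)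

(* Defs.v *)
From HB Require Import structures.
From mathcomp Require Import all_boot all_order all_algebra.
From Stdlib Require Import ClassicalEpsilon.
Set Implicit Arguments. Unset Strict Implicit. Unset Printing Implicit Defensive.

(* The complete 3-uniform hypergraph K_n^3 has vertex set 'I_n and hyperedges
   the 3-element subsets of 'I_n.  A k-colouring of its hyperedges is given by
   a finite function c : {set 'I_n} -> 'I_k (only its values on 3-sets matter). *)

Definition mono_berge_triangle (n k : nat) (c : {ffun {set 'I_n} -> 'I_k}) : bool :=
  [exists i : 'I_k, exists a : 'I_n, exists b : 'I_n, exists d : 'I_n,
   exists e1 : {set 'I_n}, exists e2 : {set 'I_n}, exists e3 : {set 'I_n},
     [&& (a != b), (b != d), (a != d),
         (e1 != e2), (e2 != e3), (e1 != e3),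
         (#|e1| == 3), (#|e2| == 3), (#|e3| == 3),
         (a \in e1) && (b \in e1), (b \in e2) && (d \in e2),
         (a \in e3) && (d \in e3) &
         [&& c e1 == i, c e2 == i & c e3 == i]]].

Definition ramsey_prop (k n : nat) : bool :=
  [forall c : {ffun {set 'I_n} -> 'I_k}, mono_berge_triangle c].

(* R_3(B(K_3), k): the smallest n with ramsey_prop k n (0 if none exists;
   such n does exist for every k, so this default is never used). *)
Definition R3_BK3 (k : nat) : nat :=
  match excluded_middle_informative (exists n, ramsey_prop k n) with
  | left h => ex_minn h
  | right _ => 0
  end.

(* Main.v *)
Require Import Defs.
From HB Require Import structures.
From mathcomp Require Import all_boot all_order all_algebra zify ring lra.
From Stdlib Require Import ClassicalEpsilon.
Set Implicit Arguments. Unset Strict Implicit. Unset Printing Implicit Defensive.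

Lemma card3 (T : finType) (x y z : T) :
  x != y -> y != z -> x != z -> #|[set x; y; z]| = 3.
Proof.
move=> xy yz xz; rewrite -setUA cardsU1 cards2 yz /= !inE negb_or xy xz.
by [].
Qed.

Lemma eq3 (T : finType) (e : {set T}) x y z :
  #|e| = 3 -> x \in e -> y \in e -> z \in e ->
  x != y -> y != z -> x != z -> e = [set x; y; z].
Proof.
move=> ce xe ye ze xy yz xz; apply/esym/eqP; rewrite eqEcard card3 // ce leqnn andbT.
by apply/subsetP=> t; rewrite !inE => /orP [/orP [] |] /eqP ->.
Qed.

Lemma ex3 (T : finType) (e : {set T}) : #|e| = 3 ->
  exists x y z, [/\ x != y, y != z & x != z] /\ e = [set x; y; z].
Proof.
move=> ce; have /card_gt2P [x [y [z [[xe ye ze] [xy yz zx]]]]] : 2 < #|e| by rewrite ce.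
have xz : x != z by rewrite eq_sym.
exists x, y, z; split; first by [].
by apply: eq3.
Qed.

Definition btri n (H : {set {set 'I_n}}) := exists a b d e1 e2 e3,
  [/\ [/\ a != b, b != d & a != d], [/\ e1 != e2, e2 != e3 & e1 != e3],
      [/\ e1 \in H, e2 \in H & e3 \in H] &
      [/\ (a \in e1) && (b \in e1), (b \in e2) && (d \in e2) & (a \in e3) && (d \in e3)]].

Definition cls n k (c : {ffun {set 'I_n} -> 'I_k}) (i : 'I_k) :=
  [set e : {set 'I_n} | (#|e| == 3) && (c e == i)].

Lemma mono_of_btri n k (c : {ffun {set 'I_n} -> 'I_k}) i :
  btri (cls c i) -> mono_berge_triangle c.
Proof.
case=> a [b [d [e1 [e2 [e3 [[ab bd ad] [d12 d23 d13] [h1 h2 h3] [m1 m2 m3]]]]]]].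
move: h1 h2 h3; rewrite !inE => /andP[c1 i1] /andP[c2 i2] /andP[c3 i3].
apply/existsP; exists i; apply/existsP; exists a; apply/existsP; exists b.
apply/existsP; exists d; apply/existsP; exists e1; apply/existsP; exists e2.
apply/existsP; exists e3. by rewrite ab bd ad d12 d23 d13 c1 c2 c3 m1 m2 m3 i1 i2 i3.
Qed.

Lemma btri_of_mono n k (c : {ffun {set 'I_n} -> 'I_k}) :
  mono_berge_triangle c -> exists i, btri (cls c i).
Proof.
case/existsP=> i /existsP[a /existsP[b /existsP[d /existsP[e1 /existsP[e2 /existsP[e3]]]]]].
move=> /and5P[ab bd ad d12 /and5P[d23 d13 c1 c2 /and5P[c3 m1 m2 m3 /and3P[i1 i2 i3]]]].
exists i, a, b, d, e1, e2, e3; split=> //; by rewrite !inE ?c1 ?c2 ?c3 ?i1 ?i2 ?i3.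
Qed.

Section Upper.
Variable n : nat.
Variable H : {set {set 'I_n}}.
Hypothesis HT : forall e, e \in H -> #|e| = 3.
Hypothesis Hfree : ~ btri H.

Definition priv (u v : 'I_n) (e : {set 'I_n}) :=
  [forall f in H, (u \in f) && (v \in f) ==> (f == e)].

Lemma privP u v e f : priv u v e -> f \in H -> u \in f -> v \in f -> f = e.
Proof. by move=> /forall_inP P fH uf vf; apply/eqP; apply: (implyP (P f fH)); rewrite uf vf. Qed.

Lemma privC u v e : priv u v e = priv v u e.
Proof. by apply: eq_forallb_in => f _; rewrite andbC. Qed.

Lemma nprivP u v e : e \in H -> ~~ priv u v e ->
  exists f, [/\ f \in H, f != e, u \in f & v \in f].
Proof.
move=> eH /forall_inPn [f fH]; rewrite negb_imply => /andP[/andP[uf vf] fe].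
by exists f.
Qed.

Lemma lemA e u v w : e \in H -> u \in e -> v \in e -> w \in e ->
  u != v -> v != w -> u != w -> ~~ priv u v e -> ~~ priv v w e -> False.
Proof.
move=> eH ue ve we uv vw uw /(nprivP eH) [f [fH fe uf vf]] /(nprivP eH) [g [gH ge vg wg]].
apply: Hfree; exists u, v, w, f, g, e; split => //; last by rewrite uf vf vg wg ue we.
split=> //; apply/eqP => fg; subst g.
move/eqP: fe; apply; rewrite (eq3 (HT fH) uf vf wg) //.
by rewrite (eq3 (HT eH) ue ve we).
Qed.

Definition isol (e : {set 'I_n}) :=
  [forall u : 'I_n, forall v : 'I_n, [&& u \in e, v \in e & u != v] ==> priv u v e].
Definition ismax (w : 'I_n) (e : {set 'I_n}) := [forall t : 'I_n, (t \in e) ==> (t <= w)%N].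
Definition good (u v : 'I_n) (e : {set 'I_n}) :=
  [&& u != v, u \in e, v \in e, priv u v e & (isol e ==> ismax u e || ismax v e)].

Lemma goodC u v e : good u v e = good v u e.
Proof.
rewrite /good privC eq_sym; case: (u \in e); case: (v \in e); rewrite ?andbF //=.
by rewrite orbC.
Qed.


Lemma isolP e a b : isol e -> a \in e -> b \in e -> a != b -> priv a b e.
Proof.
move=> /forallP/(_ a)/forallP/(_ b) /implyP I ae be ab; apply: I; by rewrite ae be ab.
Qed.

Lemma key e a b c : e \in H -> [set a; b; c] = e -> a != b -> b != c -> a != c ->
  priv a c e -> priv b c e -> (isol e -> ismax c e) ->
  exists x y z, ([/\ x != y, y != z & x != z] /\ e = [set x; y; z]) /\ good x z e /\ good y z e.
Proof.
move=> eH E ab bc ac pac pbc im; exists a, b, c; split; first by split.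
have ae : a \in e by rewrite -E !inE eqxx.
have be : b \in e by rewrite -E !inE eqxx orbT.
have ce : c \in e by rewrite -E !inE eqxx !orbT.
rewrite /good bc ac ae be ce pac pbc /=.
by split; apply/implyP => /im ->; rewrite orbT.
Qed.

Lemma perm3a (T : finType) (x y z : T) : [set x; y; z] = [set x; z; y].
Proof. by apply/setP=> t; rewrite !inE; case: (t == x); case: (t == y); case: (t == z). Qed.
Lemma perm3b (T : finType) (x y z : T) : [set x; y; z] = [set y; z; x].
Proof. by apply/setP=> t; rewrite !inE; case: (t == x); case: (t == y); case: (t == z). Qed.

Lemma Le e : e \in H ->
  exists x y z, ([/\ x != y, y != z & x != z] /\ e = [set x; y; z]) /\ good x z e /\ good y z e.
Proof.
move=> eH; case: (ex3 (HT eH)) => x [y [z [[xy yz xz] E]]].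
have xe : x \in e by rewrite E !inE eqxx.
have ye : y \in e by rewrite E !inE eqxx orbT.
have ze : z \in e by rewrite E !inE eqxx !orbT.
have yx : y != x by rewrite eq_sym.
have zy : z != y by rewrite eq_sym.
have zx : z != x by rewrite eq_sym.
have mx : forall c, c \in e -> (x <= c)%N -> (y <= c)%N -> (z <= c)%N -> ismax c e.
  move=> c _ h1 h2 h3; apply/forallP=> t; apply/implyP; rewrite E !inE.
  by case/orP=> [/orP[]|] /eqP ->.
case pxy: (priv x y e); case pyz: (priv y z e); case pxz: (priv x z e).
- case: (leqP x y) => h1.
    case: (leqP y z) => h2.
      apply: (key eH (esym E)) => // _; apply: mx => //; clear -h1 h2; lia.
    apply: (key (a := x) (b := z) (c := y) eH) => //; first by rewrite E [RHS]perm3a.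
      by rewrite privC.
      move=> _; apply: mx => //; clear -h1 h2; lia.
  case: (leqP x z) => h2.
    apply: (key eH (esym E)) => // _; apply: mx => //; clear -h1 h2; lia.
  apply: (key (a := y) (b := z) (c := x) eH) => //; first by rewrite E [RHS]perm3b.
    by rewrite privC.
    by rewrite privC.
    move=> _; apply: mx => //; clear -h1 h2; lia.
- apply: (key (a := x) (b := z) (c := y) eH) => //; first by rewrite E [RHS]perm3a.
    by rewrite privC.
  by move=> /isolP I; move: (I x z xe ze xz); rewrite pxz.
- apply: (key (a := y) (b := z) (c := x) eH) => //; first by rewrite E [RHS]perm3b.
    by rewrite privC.
    by rewrite privC.
  by move=> /isolP I; move: (I y z ye ze yz); rewrite pyz.
- exfalso; apply: (lemA (e := e) (u := y) (v := z) (w := x)) => //; first by rewrite pyz.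
  by rewrite privC pxz.
- apply: (key eH (esym E)) => // /isolP I; by move: (I x y xe ye xy); rewrite pxy.
- exfalso; apply: (lemA (e := e) (u := y) (v := x) (w := z)) => //; last by rewrite pxz.
  by rewrite privC pxy.
- exfalso; apply: (lemA (e := e) (u := x) (v := y) (w := z)) => //; by rewrite ?pxy ?pyz.
- exfalso; apply: (lemA (e := e) (u := x) (v := y) (w := z)) => //; by rewrite ?pxy ?pyz.
Qed.


Definition D := [set p : 'I_n * 'I_n | [exists e in H, good p.1 p.2 e]].

Lemma DP u v : reflect (exists2 e, e \in H & good u v e) ((u, v) \in D).
Proof.
rewrite inE; apply: (iffP existsP) => [[e /andP[eH g]]|[e eH g]]; exists e => //.
by rewrite eH g.
Qed.

Lemma Dsym u v : (u, v) \in D -> (v, u) \in D.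
Proof. by case/DP=> e eH g; apply/DP; exists e; rewrite // goodC. Qed.

Lemma Dirr u : (u, u) \in D = false.
Proof. by apply/negbTE/negP => /DP [e _]; rewrite /good eqxx. Qed.

Lemma ismax_uniq e u v : ismax u e -> ismax v e -> u \in e -> v \in e -> u = v.
Proof.
move=> /forallP/(_ v)/implyP hu /forallP/(_ u)/implyP hv ue ve.
by apply/val_inj/eqP; rewrite eqn_leq hu // hv.
Qed.

Lemma Dtri a b d : (a, b) \in D -> (b, d) \in D -> (a, d) \in D -> False.
Proof.
case/DP=> e1 H1 g1; case/DP=> e2 H2 g2; case/DP=> e3 H3 g3.
move: (g1) (g2) (g3) => /and5P[ab a1 b1 p1 i1] /and5P[bd b2 d2 p2 i2] /and5P[ad a3 d3 p3 i3].
have allq : e1 = e2 /\ e2 = e3 \/ [/\ e1 != e2, e2 != e3 & e1 != e3].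
  case: (eqVneq e1 e2) => [E12|n12].
    left; split => //; subst e2; exact: (privP p3 H1 a1 d2).
  case: (eqVneq e2 e3) => [E23|n23].
    subst e3; by move: n12; rewrite (privP p1 H2 a3 b2) eqxx.
  case: (eqVneq e1 e3) => [E13|n13].
    subst e3; by move: n12; rewrite (privP p2 H1 b1 d3) eqxx.
  by right.
case: allq => [[E12 E23]|[n12 n23 n13]]; last first.
  by apply: Hfree; exists a, b, d, e1, e2, e3; split; rewrite ?a1 ?b1 ?b2 ?d2 ?a3 ?d3.
subst e2 e3.
have E : e1 = [set a; b; d] by apply: eq3; rewrite ?HT.
have iso : isol e1.
  apply/forallP=> u; apply/forallP=> v; apply/implyP; rewrite E !inE.
  case/and3P=> /orP[/orP[]|] /eqP-> /orP[/orP[]|] /eqP->; rewrite ?eqxx //= => _;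
   rewrite -E //; by rewrite privC.
move: i1 i2 i3; rewrite iso /= => m1 m2 m3.
case ma: (ismax a e1).
  case/orP: m2 => m2.
    by move: ab; rewrite (ismax_uniq ma m2 a1 b1) eqxx.
  by move: ad; rewrite (ismax_uniq ma m2 a1 d2) eqxx.
move: m1 m3; rewrite ma /= => mb md.
by move: bd; rewrite (ismax_uniq mb md b1 d2) eqxx.
Qed.


Definition De (e : {set 'I_n}) := [set p in D | (p.1 \in e) && (p.2 \in e)].

Lemma DeI e u v : e \in H -> good u v e -> (u, v) \in De e.
Proof.
move=> eH g; rewrite inE; apply/andP; split; first by apply/DP; exists e.
by case/and5P: g => _ -> ->.
Qed.

Lemma card4 (T : finType) (p1 p2 p3 p4 : T) :
  [&& p1 != p2, p1 != p3, p1 != p4, p2 != p3, p2 != p4 & p3 != p4] ->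
  #|p1 |: (p2 |: (p3 |: [set p4]))| = 4.
Proof.
case/and5P=> h12 h13 h14 h23 /andP[h24 h34].
rewrite cardsU1 cardsU1 cardsU1 cards1 !inE.
by rewrite (negbTE h12) (negbTE h13) (negbTE h14) (negbTE h23) (negbTE h24) (negbTE h34).
Qed.

Lemma De_ge4 e : e \in H -> 4 <= #|De e|.
Proof.
move=> eH; case: (Le eH) => x [y [z [[[xy yz xz] E] [gx gy]]]].
have zx : z != x by rewrite eq_sym.
have zy : z != y by rewrite eq_sym.
have S : (x, z) |: ((z, x) |: ((y, z) |: [set (z, y)])) \subset De e.
  apply/subsetP=> p /setU1P [->|/setU1P [->|/setU1P [->|/set1P ->]]]; apply: DeI => //; by rewrite goodC.
rewrite -(card4 (p1 := (x, z)) (p2 := (z, x)) (p3 := (y, z)) (p4 := (z, y))).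
  exact: subset_leq_card S.
by rewrite !xpair_eqE (negbTE xy) (negbTE yz) (negbTE xz) (negbTE zx) (negbTE zy) ?andbF.
Qed.

Lemma cntD : \sum_(e in H) #|De e| <= #|D|.
Proof.
have -> : \sum_(e in H) #|De e| = \sum_(e in H) \sum_(p in D) ((p.1 \in e) && (p.2 \in e) : nat).
  apply: eq_bigr => e _; rewrite -sum1_card big_mkcond /= [RHS]big_mkcond /=.
  by apply: eq_bigr => p _; rewrite inE; case: (p \in D).
rewrite exchange_big /= -sum1_card; apply: leq_sum => p pD.
rewrite -big_mkcondr /= sum1dep_card.
apply/card_le1_eqP => f g; rewrite !inE => /and3P[fH uf vf] /and3P[gH ug vg].
case: p pD uf vf ug vg => u v /DP [e eH /and5P[_ _ _ pr _]] /= uf vf ug vg.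
by rewrite (privP pr fH uf vf) (privP pr gH ug vg).
Qed.

Lemma H4 : 4 * #|H| <= #|D|.
Proof.
apply: leq_trans cntD; rewrite -sum1_card big_distrr /= muln1.
by apply: leq_sum => e eH; exact: De_ge4.
Qed.

End Upper.

Lemma cardS (T : finType) (A : {set T}) : #|A| = \sum_(x : T) (x \in A : nat).
Proof. by rewrite -sum1_card big_mkcond. Qed.

Lemma amgm : forall x y, 4 * (x * y) <= (x + y) ^ 2.
Proof. move=> x y; case: (leqP x y) => h.
 have [d ->] : exists d, y = x + d by exists (y - x); lia. rewrite sqrnD; nia.
 have [d ->] : exists d, x = y + d by exists (x - y); lia. rewrite sqrnD; nia. Qed.

Section Mantel.
Variable n : nat.
Variable D : {set 'I_n * 'I_n}.
Hypothesis Dsym : forall u v, (u, v) \in D -> (v, u) \in D.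
Hypothesis Dtri : forall a b d, (a, b) \in D -> (b, d) \in D -> (a, d) \in D -> False.

Definition deg (u : 'I_n) := #|[set w | (u, w) \in D]|.

Lemma sum_deg (P : pred 'I_n) :
  \sum_(u | P u) deg u = #|[set p in D | P p.1]|.
Proof.
rewrite cardS /deg.
under eq_bigr do rewrite cardS.
rewrite pair_big /=; rewrite [RHS](bigID (fun p : 'I_n * 'I_n => P p.1)) /=.
rewrite [X in _ = _ + X]big1 ?addn0; last by move=> p /negbTE Pp; rewrite inE Pp andbF.
apply: eq_big => [[u w]|[u w] /= Pu] /=; first by rewrite andbT.
by move: Pu; rewrite andbT !inE /= => ->; rewrite andbT.
Qed.

Lemma mantel : 2 * #|D| <= n ^ 2.
Proof.
case: (posnP n) => [n0|npos].
  have : #|D| <= #|{: 'I_n * 'I_n}| by apply: max_card.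
  rewrite card_prod card_ord => h.
  have : #|D| <= 0 by move: h; rewrite [X in _ <= X * _]n0.
  by rewrite leqn0 => /eqP ->.
have [v0 _ Hmax] : exists2 v0, true & forall v, deg v <= deg v0.
  case: (arg_maxnP (i0 := Ordinal npos) (P := xpredT) deg erefl) => v _ h.
  by exists v => // j; exact: h.
pose N := [set w | (v0, w) \in D].
have dN : deg v0 = #|N| by [].
have eD : #|D| = #|[set p in D | p.1 \in N]| + #|[set p in D | p.1 \notin N]|.
  have -> : #|D| = \sum_(u | true) deg u.
    by rewrite sum_deg; apply: eq_card => p; rewrite !inE andbT.
  rewrite (bigID (fun u => u \in N)) /= !sum_deg.
  by congr (_ + _); apply: eq_card => p; rewrite !inE.
have D12 : #|[set p in D | p.1 \in N]| <= #|[set p in D | p.1 \notin N]|.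
  have inj : injective (fun p : 'I_n * 'I_n => (p.2, p.1)) by move=> [a b] [c d] [-> ->].
  rewrite -(card_imset _ inj); apply: subset_leq_card; apply/subsetP => q.
  case/imsetP => -[a b]; rewrite !inE /= => /andP[ab aN] ->; rewrite (Dsym ab) /=.
  apply/negP => bN; exact: (Dtri aN ab bN).
have D2 : #|[set p in D | p.1 \notin N]| <= (n - #|N|) * #|N|.
  have -> : #|[set p in D | p.1 \notin N]| = \sum_(u | u \notin N) deg u by rewrite sum_deg.
  apply: leq_trans (_ : \sum_(u | u \notin N) #|N| <= _).
    by apply: leq_sum => u _; rewrite -dN.
  rewrite sum_nat_const; apply: leq_mul => //.
  have -> : #|[pred u | u \notin N]| = #|~: N| by apply: eq_card => u; rewrite !inE.
  by rewrite cardsCs setCK card_ord.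
have NL : #|N| <= n by apply: leq_trans (max_card _) _; rewrite card_ord.
move: D12 D2 NL; rewrite eD; set a := #|N|; set b := #|[set p in D | _ \in N]|;
  set c := #|[set p in D | _ \notin N]| => h1 h2 h3.
have : 4 * ((n - a) * a) <= n ^ 2.
  by have := amgm (n - a) a; rewrite subnK.
lia.
Qed.
End Mantel.

Lemma cls_bound n k (c : {ffun {set 'I_n} -> 'I_k}) i :
  ~~ mono_berge_triangle c -> 8 * #|cls c i| <= n ^ 2.
Proof.
move=> nm.
have HT : forall e, e \in cls c i -> #|e| = 3 by move=> e; rewrite inE => /andP[/eqP].
have Hf : ~ btri (cls c i) by move=> /mono_of_btri; apply/negP.
have h4 := H4 HT Hf.
have hm := mantel (D := D (cls c i)) (fun u v => @Dsym _ _ u v) (@Dtri _ _ HT Hf).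
apply: leq_trans hm; rewrite (_ : 8 = 2 * 4) // -mulnA leq_mul2l /=; exact: h4.
Qed.

Lemma sum_cls n k (c : {ffun {set 'I_n} -> 'I_k}) :
  \sum_i #|cls c i| = 'C(n, 3).
Proof.
rewrite -[n in RHS]card_ord -card_draws.
set T3 := [set _ | _]; rewrite (cardS T3).
under eq_bigr do rewrite cardS.
rewrite exchange_big /=; apply: eq_bigr => e _.
rewrite (bigD1 (c e)) //= big1 => [|j /negbTE jn]; last by rewrite inE (eq_sym (c e)) jn andbF.
by rewrite !inE eqxx andbT addn0.
Qed.

Lemma C3 n : 'C(n, 3) * 6 = n * (n - 1) * (n - 2).
Proof.
have := bin_ffact n 3; rewrite [3`!]/= => ->.
by rewrite !ffactnS ffactn0 muln1 -!subn1 -subnDA mulnA.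
Qed.

Lemma ramsey_up k n : k * n ^ 2 < 8 * 'C(n, 3) -> ramsey_prop k n.
Proof.
move=> h; apply/forallP => c; case: (boolP (mono_berge_triangle c)) => // nm; exfalso.
have : \sum_(i < k) 8 * #|cls c i| <= \sum_(i < k) n ^ 2 by apply: leq_sum => i _; exact: (cls_bound i nm).
rewrite -big_distrr /= sum_cls sum_nat_const card_ord => h2.
by move: h; rewrite ltnNge h2.
Qed.

Lemma disj_notri n (H : {set {set 'I_n}}) :
  (forall e f u, e \in H -> f \in H -> u \in e -> u \in f -> e = f) -> ~ btri H.
Proof.
move=> Hd [a [b [d [e1 [e2 [e3 [_ [n12 _ _] [h1 h2 _] [/andP[_ b1] /andP[b2 _] _]]]]]]]].
by move/eqP: n12; apply; apply: (Hd _ _ b).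
Qed.

Section SZ.
Variable n : nat.
Variable t : 'I_n -> bool.
Variable R : rel 'I_n.
Hypothesis Rsym : forall u v, R u v -> R v u.
Hypothesis Rfun : forall u v w, R u v -> R u w -> v = w.
Variable H : {set {set 'I_n}}.
Hypothesis Hform : forall e, e \in H -> exists x y z,
  [/\ e = [set x; y; z], x != y, t x && t y, ~~ t z & R x y].

Lemma F1 e u v : e \in H -> u \in e -> v \in e -> ~~ t u -> ~~ t v -> u = v.
Proof.
move=> /Hform [x [y [z [-> _ /andP[tx ty] _ _]]]].
rewrite !inE => /orP[/orP[]|] /eqP -> /orP[/orP[]|] /eqP ->; by rewrite ?tx ?ty.
Qed.

Lemma F2 e u v : e \in H -> u \in e -> v \in e -> u != v -> t u -> t v -> R u v.
Proof.
move=> /Hform [x [y [z [-> _ /andP[tx ty] tz rxy]]]].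
rewrite !inE => /orP[/orP[]|] /eqP -> /orP[/orP[]|] /eqP ->; rewrite ?eqxx // => _;
  rewrite ?(negbTE tz) // => _ _; exact: Rsym.
Qed.

Lemma F3 e u v u' : e \in H -> u \in e -> v \in e -> t u -> ~~ t v -> R u u' ->
  e = [set u; u'; v].
Proof.
move=> /Hform [x [y [z [-> _ /andP[tx ty] tz rxy]]]].
have ez : forall w, w \in [set x; y; z] -> ~~ t w -> w = z.
  move=> w; rewrite !inE => /orP[/orP[]|] /eqP ->; by rewrite ?tx ?ty.
move=> ue ve tu tv ru; rewrite (ez v ve tv).
move: ue; rewrite !inE => /orP[/orP[]|] /eqP eu; subst u.
- by rewrite (Rfun ru rxy).
- rewrite (Rfun ru (Rsym rxy)).
  by apply/setP=> w; rewrite !inE; case: (w == x); case: (w == y).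
- by rewrite (negbTE tz) in tu.
Qed.

Lemma SZ_notri : ~ btri H.
Proof.
move=> [a [b [d [e1 [e2 [e3 [[ab bd ad] [n12 n23 n13] [h1 h2 h3]
   [/andP[a1 b1] /andP[b2 d2] /andP[a3 d3]]]]]]]]].
case ta: (t a); case tb: (t b); case td: (t d).
- have r1 := F2 h1 a1 b1 ab ta tb.
  have r3 := F2 h3 a3 d3 ad ta td.
  by move: bd; rewrite (Rfun r1 r3) eqxx.
- have r1 := F2 h1 a1 b1 ab ta tb.
  have E3 := F3 h3 a3 d3 ta (negbT td) r1.
  have E2 := F3 h2 b2 d2 tb (negbT td) (Rsym r1).
  move/eqP: n23; apply; rewrite E2 E3.
  by apply/setP=> w; rewrite !inE; case: (w == a); case: (w == b).
- have r3 := F3 h3 a3 d3 ta.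
  have r1 := F2 h3 a3 d3 ad ta td.
  have E1 := F3 h1 a1 b1 ta (negbT tb) r1.
  have E2 := F3 h2 d2 b2 td (negbT tb) (Rsym r1).
  move/eqP: n12; apply; rewrite E1 E2.
  by apply/setP=> w; rewrite !inE; case: (w == a); case: (w == d).
- by move: bd; rewrite (F1 h2 b2 d2 (negbT tb) (negbT td)) eqxx.
- have r2 := F2 h2 b2 d2 bd tb td.
  have E1 := F3 h1 b1 a1 tb (negbT ta) r2.
  have E3 := F3 h3 d3 a3 td (negbT ta) (Rsym r2).
  move/eqP: n13; apply; rewrite E1 E3.
  by apply/setP=> w; rewrite !inE; case: (w == b); case: (w == d).
- by move: ad; rewrite (F1 h3 a3 d3 (negbT ta) (negbT td)) eqxx.
- by move: ab; rewrite (F1 h1 a1 b1 (negbT ta) (negbT tb)) eqxx.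
- by move: ab; rewrite (F1 h1 a1 b1 (negbT ta) (negbT tb)) eqxx.
Qed.
End SZ.

Lemma odd_half (a b : nat) : a %/ 2 = b %/ 2 -> a != b -> odd a != odd b.
Proof.
move=> h1 h2; have := divn_eq a 2; have := divn_eq b 2; rewrite !modn2.
move: h2; case: (odd a); case: (odd b) => //= h2 ea eb; exfalso; lia.
Qed.

Section Constr.
Variables (c W m n k' : nat).
Hypothesis cpos : 0 < c.
Hypothesis cW : c <= W.+1.
Hypothesis nle : n <= c * 2 ^ m.

Definition Ml j := c * 2 ^ j.
Definition B := #|{: {set 'I_W.+1}}|.

Lemma MlS j : Ml j.+1 = Ml j * 2.
Proof. by rewrite /Ml expnSr mulnA. Qed.

Lemma Ml_pos j : 0 < Ml j.
Proof. by rewrite /Ml muln_gt0 cpos expn_gt0. Qed.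

Lemma Ml_mono i j : i < j -> Ml i * 2 <= Ml j.
Proof.
move=> ij; rewrite -MlS /Ml leq_mul2l leq_pexp2l ?ij ?orbT //.
Qed.

Definition cert (e : {set 'I_n}) (w : 'I_m * 'I_n * 'I_n * 'I_n) :=
  let: (j, x, y, z) := w in
  [&& e == [set x; y; z], x != y, (x %/ Ml j == y %/ Ml j),
      (z %/ Ml j != x %/ Ml j) & (z %/ Ml j.+1 == x %/ Ml j.+1)].

Definition enc (j : nat) (o : bool) (s : nat) := B + 2 * Ml j + o * Ml j + s.

Definition resset (e : {set 'I_n}) : {set 'I_W.+1} := [set inord (val u %% c) | u in e].

Definition code (e : {set 'I_n}) : nat :=
  match [pick w | cert e w] with
  | Some (j, x, y, z) => enc j (odd (x %/ Ml j)) ((x + y) %% Ml j)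
  | None => enum_rank (resset e)
  end.

Definition colr : {ffun {set 'I_n} -> 'I_k'.+1} := [ffun e => inord (code e)].

Lemma enc_inj j1 j2 o1 o2 s1 s2 : s1 < Ml j1 -> s2 < Ml j2 ->
  enc j1 o1 s1 = enc j2 o2 s2 -> [/\ j1 = j2, o1 = o2 & s1 = s2].
Proof.
rewrite /enc => h1 h2 E.
have jj : j1 = j2.
  case: (ltngtP j1 j2) => // lt; [have := Ml_mono lt | have := Ml_mono lt];
  move: E; case: o1; case: o2 => /= E M; exfalso; lia.
subst j2; move: E; case: o1; case: o2 => /= E; split => //; lia.
Qed.


Lemma cert_ex (x y z : 'I_n) : x != y -> y != z -> x != z ->
  ~ (x %/ c = y %/ c /\ y %/ c = z %/ c) -> exists w, cert [set x; y; z] w.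
Proof.
move=> xy yz xz nb.
pose P j := (x %/ Ml j == y %/ Ml j) && (y %/ Ml j == z %/ Ml j).
have Pm : P m.
  have small : forall u : 'I_n, u %/ Ml m = 0.
    move=> u; apply: divn_small; apply: leq_trans (ltn_ord u) nle.
  by rewrite /P !small.
have PmE : exists j, P j by exists m.
case: (ex_minnP PmE) => j0 Pj0 minj0.
have j0m : j0 <= m by apply: minj0.
case: j0 Pj0 minj0 j0m => [|j] Pj minj jm.
  by exfalso; apply: nb; move: Pj; rewrite /P /Ml expn0 muln1 => /andP[/eqP -> /eqP ->].
have nPj : ~~ P j by apply/negP => /minj; rewrite ltnn.
have jm' : j < m by [].
have dv : forall u : nat, u %/ Ml j.+1 = (u %/ Ml j) %/ 2 by move=> u; rewrite MlS divnMA.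
move: Pj nPj; rewrite /P !dv.
set qx := x %/ Ml j; set qy := y %/ Ml j; set qz := z %/ Ml j.
move=> /andP[/eqP h1 /eqP h2] nP.
case: (eqVneq qx qy) => exy.
  have ezx : qz != qx by apply: (contraNneq _ nP) => E; rewrite E exy !eqxx.
  exists (Ordinal jm', x, y, z); rewrite /cert /= eqxx xy /=.
  apply/and3P; split; [exact/eqP | exact: ezx | rewrite !dv; apply/eqP].
  by rewrite -h2 h1.
case: (eqVneq qz qx) => ezx.
  exists (Ordinal jm', x, z, y); rewrite /cert /= xz /=.
  apply/and4P; split.
  - by apply/eqP/setP=> w; rewrite !inE; case: (w == x); case: (w == y); case: (w == z).
  - by apply/eqP; symmetry; exact: ezx.
  - by rewrite eq_sym; exact: exy.
  - by rewrite !dv; apply/eqP; symmetry; exact: h1.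
case: (eqVneq qy qz) => eyz.
  exists (Ordinal jm', y, z, x); rewrite /cert /= yz /=.
  apply/and4P; split.
  - by apply/eqP/setP=> w; rewrite !inE; case: (w == x); case: (w == y); case: (w == z).
  - by apply/eqP; exact: eyz.
  - exact: exy.
  - by rewrite !dv; apply/eqP; exact: h1.
exfalso; move/eqP: exy; move/eqP: ezx; move/eqP: eyz; move: h1 h2; clear; move=> *; lia.
Qed.


Lemma code_lt e : code e < B + 2 * Ml m.
Proof.
rewrite /code; case: pickP => [[[[j x] y] z] _|_].
  rewrite /enc; have := ltn_pmod (x + y) (Ml_pos j); have := Ml_mono (ltn_ord j).
  move: (Ml j) (Ml m) => M1 M2.
  set s := (_ %% _); move: s => s.
  case: (odd _) => /=; lia.
exact: (leq_trans (ltn_ord (enum_rank (resset e))) (leq_addr _ _)).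
Qed.

Lemma code_some e j x y z : cert e (j, x, y, z) ->
  exists j' x' y' z', cert e (j', x', y', z') /\ code e = enc j' (odd (x' %/ Ml j')) ((x' + y') %% Ml j').
Proof.
move=> ce; rewrite /code; case: pickP => [[[[j' x'] y'] z'] ce' |/(_ (j, x, y, z))]; last by rewrite ce.
by exists j', x', y', z'.
Qed.

Lemma code_none e : (forall w, ~~ cert e w) -> code e = enum_rank (resset e).
Proof.
move=> nc; rewrite /code; case: pickP => [w cw|//]; by rewrite (negbTE (nc w)) in cw.
Qed.


Lemma no_mono : B + 2 * Ml m <= k'.+1 -> ~~ mono_berge_triangle colr.
Proof.
move=> hk; apply/negP => /btri_of_mono [i Hb].
have codeE : forall e, e \in cls colr i -> code e = i.
  move=> e; rewrite inE => /andP[_ /eqP <-]; rewrite ffunE inordK //.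
  exact: leq_trans (code_lt e) hk.
have HT : forall e, e \in cls colr i -> #|e| = 3 by move=> e; rewrite inE => /andP[/eqP].
have [e1 e1H] : exists e1, e1 \in cls colr i.
  by case: Hb => a [b [d [e1 [e2 [e3 [_ _ [h1 _ _] _]]]]]]; exists e1.
case: (leqP B i) => hB.
- have lev : forall e, e \in cls colr i -> exists j x y z, cert e (j, x, y, z) /\
      code e = enc j (odd (x %/ Ml j)) ((x + y) %% Ml j).
    move=> e eH.
    case: (boolP [exists w, cert e w]) => [/existsP [[[[j x] y] z] cw]|].
      exact: code_some cw.
    rewrite negb_exists => /forallP nc; move: hB; rewrite -(codeE e eH) code_none // => h.
    by have := leq_ltn_trans h (ltn_ord _); rewrite ltnn.
  case: (lev e1 e1H) => j0 [x0 [y0 [z0 [_ c0]]]].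
  pose M := Ml j0; pose o0 := odd (x0 %/ M); pose s0 := (x0 + y0) %% M.
  apply: (SZ_notri (t := fun u => odd (u %/ M) == o0)
     (R := fun u v => (u %/ M == v %/ M) && ((u + v) %% M == s0)) _ _ _ Hb).
  + by move=> u v /andP[/eqP e /eqP f]; rewrite e eqxx addnC f eqxx.
  + move=> u v w /andP[/eqP uv /eqP s1] /andP[/eqP uw /eqP s2].
    apply/val_inj.
    have : (u + v == u + w %[mod M]) by rewrite s1 s2.
    rewrite eqn_modDl => /eqP vw.
    by rewrite /= (divn_eq v M) (divn_eq w M) -uv -uw vw.
  + move=> e eH; case: (lev e eH) => j [x [y [z [ce cod]]]].
    have := codeE e eH; rewrite cod -(codeE e1 e1H) c0 => E.
    case: (enc_inj (ltn_pmod _ (Ml_pos _)) (ltn_pmod _ (Ml_pos _)) E) => jj oo ss.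
    move: ce; rewrite /cert => /and5P[/eqP -> xy /eqP exy ezx /eqP ezx2].
    exists x, y, z; split => //.
    * by rewrite /M /o0 -jj - oo -exy eqxx.
    * rewrite /M /o0 -jj - oo; apply: odd_half => //.
      by move: ezx2; rewrite !MlS (divnMA z (Ml j) 2) (divnMA x (Ml j) 2).
    * by rewrite /M /s0 -jj exy eqxx ss eqxx.
- apply: (disj_notri _ Hb) => e f u eH fH ue uf.
  have nce : forall g, g \in cls colr i -> forall w, ~~ cert g w.
    move=> g gH w; apply/negP => cw; case: w cw => [[[j x] y] z] cw.
    case: (code_some cw) => j' [x' [y' [z' [_ cod]]]].
    by move: hB; rewrite -(codeE g gH) cod /enc -!addnA ltnNge leq_addr.
  have blk : forall g, g \in cls colr i -> forall v w, v \in g -> w \in g -> v %/ c = w %/ c.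
    move=> g gH; case: (ex3 (HT g gH)) => x [y [z [[xy yz xz] Eg]]].
    have [h1 h2] : x %/ c = y %/ c /\ y %/ c = z %/ c.
      case: (boolP ((x %/ c == y %/ c) && (y %/ c == z %/ c))) => [/andP[/eqP h1 /eqP h2]|nb].
        by [].
      exfalso; case: (cert_ex xy yz xz) => [[h1 h2]|w cw].
        by move: nb; rewrite h1 h2 !eqxx.
      by move: (nce _ gH w); rewrite Eg cw.
    move=> v w; rewrite Eg !inE => /orP[/orP[]|] /eqP -> /orP[/orP[]|] /eqP ->;
      by rewrite ?h1 ?h2.
  have rs : resset e = resset f.
    apply: enum_rank_inj; apply: val_inj => /=.
    by rewrite -(code_none (nce e eH)) -(code_none (nce f fH)) (codeE e eH) (codeE f fH).
  have sub : e \subset f.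
    apply/subsetP => v ve.
    have : inord (v %% c) \in resset f by rewrite -rs; apply/imsetP; exists v.
    case/imsetP => v' v'f /(congr1 (@nat_of_ord _)).
    rewrite !inordK; try exact: (leq_trans (ltn_pmod _ cpos) cW).
    move=> mv; have dv : v %/ c = v' %/ c by rewrite (blk e eH v u ve ue) (blk f fH v' u v'f uf).
    suff -> : v = v' by [].
    by apply/val_inj; rewrite /= (divn_eq v c) (divn_eq v' c) dv mv.
  by apply/eqP; rewrite eqEcard sub (HT e eH) (HT f fH) leqnn.
Qed.

End Constr.

Lemma ramsey_n0 k : ramsey_prop k (3 * k %/ 4 + 4).
Proof.
apply: ramsey_up.
set q := 3 * k %/ 4.
have hq : 3 * k <= 4 * q + 3 by rewrite /q; lia.
have h6 := C3 (q + 4).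
rewrite -(ltn_pmul2l (_ : 0 < 6)) //.
have -> : 6 * (8 * 'C(q + 4, 3)) = 8 * ((q + 4) * (q + 4 - 1) * (q + 4 - 2)) by rewrite -h6; lia.
have -> : q + 4 - 1 = q + 3 by lia.
have -> : q + 4 - 2 = q + 2 by lia.
have hk := leq_mul hq (leqnn ((q + 4) ^ 2)).
have : 2 * ((4 * q + 3) * (q + 4) ^ 2) < 8 * ((q + 4) * (q + 3) * (q + 2)) by nia.
move: hk; rewrite -mulnA; move: (k * (q + 4) ^ 2) => t; lia.
Qed.

Lemma R_up k : R3_BK3 k <= 3 * k %/ 4 + 4.
Proof.
rewrite /R3_BK3; case: excluded_middle_informative => [h|nh].
  by case: (ex_minnP h) => r _ /(_ _ (ramsey_n0 k)).
by exfalso; apply: nh; exists (3 * k %/ 4 + 4); exact: ramsey_n0.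
Qed.

Lemma R_low c W m k : 0 < c -> c <= W.+1 -> B W + 2 * (c * 2 ^ m) <= k ->
  c * 2 ^ m < R3_BK3 k.
Proof.
move=> cpos cW hk.
rewrite /R3_BK3; case: excluded_middle_informative => [h|nh]; last first.
  by exfalso; apply: nh; exists (3 * k %/ 4 + 4); exact: ramsey_n0.
case: (ex_minnP h) => r Pr _; rewrite ltnNge; apply/negP => rle.
case: k hk h Pr => [|k'] hk h Pr.
  have : 0 < c * 2 ^ m by rewrite muln_gt0 cpos expn_gt0.
  move: hk; move: (c * 2 ^ m) => t; lia.
move/forallP: Pr => /(_ (colr c W m r k')).
by apply/negP; apply: no_mono.
Qed.

Lemma split_cm C X : 0 < C -> C <= X ->
  exists c m, [/\ C <= c, c < 2 * C, c * 2 ^ m <= X & X < (c + 1) * 2 ^ m].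
Proof.
move=> Cpos CX.
pose P m := C * 2 ^ m <= X.
have P0 : P 0 by rewrite /P expn0 muln1.
have Pb : forall j, P j -> j <= X.
  move=> j Pj; apply: leq_trans (ltnW (ltn_expl j (isT : 1 < 2))) _.
  apply: leq_trans Pj; exact: leq_pmull.
case: (ex_maxnP (ex_intro P 0 P0) Pb) => m Pm maxm.
have nP : ~~ P m.+1 by apply/negP => /maxm; rewrite ltnn.
have p2 : 0 < 2 ^ m by rewrite expn_gt0.
exists (X %/ 2 ^ m), m; split.
- by rewrite leq_divRL.
- by rewrite ltn_divLR // (mulnC 2 C) -mulnA -expnS ltnNge.
- exact: leq_trunc_div.
- by rewrite addn1 ltn_ceil.
Qed.

Import Order.TTheory GRing.Theory Num.Theory.

Lemma nat_low C k BB X N p : k <= BB + 2 * X + 1 -> X <= N + p -> C * p <= N -> 2 * N <= k ->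
  C * k <= C * BB.+1 + 2 * C * N + k.
Proof.
move=> h1 h2 h3 h4.
have hA := leq_mul (leqnn C) h1.
have hB := leq_mul (leqnn C) h2.
lia.
Qed.

Local Open Scope ring_scope.
Lemma rat_low (eps : rat) (C k N R BB : nat) : 0 < eps -> (0 < C)%N ->
  1 < eps * C%:R -> (BB.+1)%:R <= eps * k%:R ->
  (C * k <= C * BB.+1 + 2 * C * N + k)%N -> (N <= R)%N ->
  (1 / 2 - eps) * k%:R <= R%:R.
Proof.
move=> ep Cp eC eB hn NR.
have hq : C%:R * k%:R <= C%:R * (BB.+1)%:R + 2 * C%:R * N%:R + k%:R :> rat.
  by move: hn; rewrite -(ler_nat rat) !natrD !natrM.
have hNq : N%:R <= R%:R :> rat by rewrite ler_nat.
have Cq : 0 < C%:R :> rat by rewrite ltr0n.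
have kq : 0 <= k%:R :> rat by [].
move: hq hNq Cq kq eC eB; move: (C%:R) (k%:R) (N%:R) (R%:R) ((BB.+1)%:R) => c' k' n' r' b' *.
nra.
Qed.


Local Close Scope ring_scope.
Lemma nat_prep (K1 K2 BB C k : nat) : K1 + K2 + BB + 2 * C + 2 <= k ->
  [/\ K1 <= k, K2 <= k, BB <= k & C <= (k - BB) %/ 2].
Proof. move=> h; split; lia. Qed.

Lemma nat_after (k BB c p C : nat) : BB <= k -> c * p <= (k - BB) %/ 2 -> (k - BB) %/ 2 < (c + 1) * p -> C <= c ->
  [/\ BB + 2 * (c * p) <= k, k <= BB + 2 * ((k - BB) %/ 2) + 1,
      (k - BB) %/ 2 <= c * p + p, C * p <= c * p & 2 * (c * p) <= k].
Proof.
move=> h0 h1 h2 h3; rewrite mulnDl mul1n in h2.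
have h4 : C * p <= c * p by rewrite leq_mul2r h3 orbT.
move: h1 h2 h4; move: (c * p) (C * p) => a b h1 h2 h4.
split; lia.
Qed.

Lemma nat_up R k : R <= 3 * k %/ 4 + 4 -> 4 * R <= 3 * k + 16.
Proof. move=> h; have := leq_trunc_div (3 * k) 4; move: (3 * k %/ 4) h => q; lia. Qed.

Local Open Scope ring_scope.

Theorem theorem1 :
  forall eps : rat, 0 < eps ->
  exists K : nat, forall k : nat, (K <= k)%N ->
    (1 / 2 - eps) * k%:R <= (R3_BK3 k)%:R :> rat /\
    (R3_BK3 k)%:R <= (3 / 4 + eps) * k%:R :> rat.
Proof.
move=> eps ep.
set C0 := Num.Def.archi_bound (1 / eps).
have hC0 : 1 / eps < C0%:R by apply: archi_boundP; rewrite divr_ge0 // ltW.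
set C := C0.+1.
set W := (2 * C)%N.
set BB := B W.
set K1 := Num.Def.archi_bound (4 / eps).
have hK1 : 4 / eps < K1%:R by apply: archi_boundP; rewrite divr_ge0 // ltW.
set K2 := Num.Def.archi_bound ((BB.+1)%:R / eps).
have hK2 : (BB.+1)%:R / eps < K2%:R by apply: archi_boundP; rewrite divr_ge0 // ltW.
exists (K1 + K2 + BB + 2 * C + 2)%N => k hk.
case: (nat_prep hk) => k1 k2 kB CX.
have kK1 : K1%:R <= k%:R :> rat by rewrite ler_nat.
have kK2 : K2%:R <= k%:R :> rat by rewrite ler_nat.
have e4 : 4 <= eps * k%:R.
  have : 4 / eps < k%:R by apply: lt_le_trans kK1.
  by rewrite ltr_pdivrMr // mulrC => /ltW.
have eB : (BB.+1)%:R <= eps * k%:R.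
  have : (BB.+1)%:R / eps < k%:R by apply: lt_le_trans kK2.
  by rewrite ltr_pdivrMr // mulrC => /ltW.
have eC : 1 < eps * C%:R.
  have : 1 / eps < C%:R by apply: lt_le_trans hC0 _; rewrite ler_nat.
  by rewrite ltr_pdivrMr // mulrC.
split.
- have Cpos : (0 < C)%N by [].
  case: (split_cm Cpos CX) => c [m [Cc c2C cX Xc]].
  case: (nat_after kB cX Xc Cc) => hBN h1 h2 h3 h2N.
  set X := ((k - BB) %/ 2)%N in h1 h2.
  set p := (2 ^ m)%N in hBN h1 h2 h3 h2N.
  set N := (c * p)%N in hBN h1 h2 h3 h2N.
  have c0 : (0 < c)%N by apply: leq_trans Cc.
  have cW : (c <= W.+1)%N by rewrite /W ltnW // ltnW.
  have hNR' : (N <= R3_BK3 k)%N by apply: ltnW; apply: (R_low c0 cW hBN).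
  have hn := @nat_low C k BB X N p h1 h2 h3 h2N.
  exact: (@rat_low eps C k N (R3_BK3 k) BB ep Cpos eC eB hn hNR').
- have hR := R_up k.
  have h4 := nat_up hR.
  have h4r : 4 * (R3_BK3 k)%:R <= 3 * k%:R + 16 :> rat.
    by move: h4; rewrite -(ler_nat rat) natrM natrD natrM.
  lra.
Qed.
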